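(* Let $X$ be a graph with Hamiltonian $M\in\{A,L,Q\}$, let $s\in\mathbb{R}\setminus\{0\}$, and suppose the $s$-pair states $\mathbf u=\mathbf e_a+s\mathbf e_b$ and $\boldsymbol\mu=\mathbf e_\alpha+s\mathbf e_\beta$ are strongly cospectral with respect to $M$. If $s\neq1$, then every automorphism of $X$ that fixes $a$ and fixes $b$ also fixes $\alpha$ and fixes $\beta$. If $s=1$, then every automorphism of $X$ that fixes the set $\{a,b\}$ also fixes the set $\{\alpha,\beta\}$.
   Context: $A$, $L=D-A$, $Q=D+A$ are the adjacency, Laplacian, signless Laplacian matrices. An $s$-pair state is $\mathbf e_a+s\mathbf e_b$ with $a\neq b$ vertices. For $M=\sum_\lambda\lambda E_\lambda$ (orthogonal spectral projections), real vectors $\mathbf u,\boldsymbol\mu$ are strongly cospectral if $E_\lambda\mathbf u=\pm E_\lambda\boldsymbol\mu$ for every eigenvalue $\lambda$. *)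

(* Defs.v *)
From HB Require Import structures.
From mathcomp Require Import all_boot all_order all_algebra all_fingroup.
From mathcomp Require Import reals.
Set Implicit Arguments. Unset Strict Implicit. Unset Printing Implicit Defensive.
Import Order.TTheory GRing.Theory Num.Theory.
Local Open Scope ring_scope.

Definition simple_graph (n : nat) (e : rel 'I_n) : Prop :=
  (forall x y, e x y = e y x) /\ (forall x, e x x = false).

Section Mats.
Variables (R : realType) (n : nat) (e : rel 'I_n).

Definition adjmx : 'M[R]_n := \matrix_(i, j) (e i j)%:R.
Definition degmx : 'M[R]_n := \matrix_(i, j) ((i == j)%:R * (#|[set k | e i k]|)%:R).
Definition lapmx : 'M[R]_n := degmx - adjmx.
Definition slapmx : 'M[R]_n := degmx + adjmx.
End Mats.

Inductive hamiltonian := HamA | HamL | HamQ.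

Definition ham_mx (R : realType) (n : nat) (e : rel 'I_n) (h : hamiltonian) : 'M[R]_n :=
  match h with
  | HamA => adjmx R e
  | HamL => lapmx R e
  | HamQ => slapmx R e
  end.

(* orthogonal projection onto the eigenspace of M for lam:
   B^T (B B^T)^{-1} B, where the rows of B form a basis of the eigenspace *)
Definition eigproj (R : realType) (n : nat) (M : 'M[R]_n) (lam : R) : 'M[R]_n :=
  let B := row_base (eigenspace M lam) in
  B^T *m invmx (B *m B^T) *m B.

Definition strongly_cospectral (R : realType) (n : nat) (M : 'M[R]_n)
  (u mu : 'cV[R]_n) : Prop :=
  forall lam : R, eigenvalue M lam ->
    exists eps : R, (eps = 1 \/ eps = -1) /\
      eigproj M lam *m u = eps *: (eigproj M lam *m mu).

Definition basis_vec (R : realType) (n : nat) (a : 'I_n) : 'cV[R]_n :=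
  \col_i (i == a)%:R.
Definition pair_state (R : realType) (n : nat) (s : R) (a b : 'I_n) : 'cV[R]_n :=
  basis_vec R a + s *: basis_vec R b.

Definition graph_aut (n : nat) (e : rel 'I_n) (g : {perm 'I_n}) : Prop :=
  forall x y, e (g x) (g y) = e x y.

(* Main.v *)
Require Import Defs.
From HB Require Import structures.
From mathcomp Require Import all_boot all_order all_algebra all_fingroup.
From mathcomp Require Import reals complex.
Set Implicit Arguments. Unset Strict Implicit. Unset Printing Implicit Defensive.
Import Order.TTheory GRing.Theory Num.Theory.
Local Open Scope ring_scope.

Section Spec.
Variable R : rcfType.

Lemma sq0 k (u : 'rV[R]_k) : (u *m u^T) 0 0 = 0 -> u = 0.
Proof.
rewrite !mxE => /eqP; rewrite psumr_eq0; last by move=> j _; rewrite mxE -expr2 sqr_ge0.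
move=> /allP H; apply/rowP => j; rewrite mxE.
have := H j (mem_index_enum _); rewrite mxE -expr2 sqrf_eq0 => /eqP ->//.
Qed.

Variable m : nat.
Variable M : 'M[R]_m.+1.
Hypothesis symM : M^T = M.

Lemma real_root (z : R[i]) : root (map_poly (real_complex R) (char_poly M)) z ->
  z = (complex.Re z)%:C%C.
Proof.
rewrite map_char_poly -eigenvalue_root_char => /eigenvalueP [v vN vn0].
set N := map_mx (real_complex R) M in vN.
have NT : N^T = N by rewrite /N map_trmx symM.
have Nc : map_mx Num.conj N = N.
  by apply/matrixP => i j; rewrite !mxE /=; exact: conjc_real.
set vc := map_mx Num.conj v.
have vcN : vc *m N = z^* *: vc.
  by rewrite -Nc /vc -map_mxM vN map_mxZ.
have e1 : (v *m N) *m vc^T = z *: (v *m vc^T) by rewrite vN scalemxAl.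
have e2 : v *m (N *m vc^T) = z^* *: (v *m vc^T).
  have -> : N *m vc^T = (vc *m N)^T by rewrite trmx_mul NT.
  by rewrite vcN linearZ /= scalemxAr.
rewrite mulmxA e1 in e2.
have s0 : (v *m vc^T) 0 0 != 0.
  rewrite !mxE; apply/negP => /eqP /eqP.
  rewrite psumr_eq0; last by move=> j _; rewrite !mxE mul_conjC_ge0.
  move=> /allP H; move: vn0; apply/negP; rewrite negbK; apply/eqP/rowP => j.
  have := H j (mem_index_enum _); rewrite !mxE mul_conjC_eq0 => /eqP ->//.
have zr : z^* = z.
  move/matrixP: e2 => /(_ 0 0); rewrite [LHS]mxE [RHS]mxE => /eqP.
  rewrite -subr_eq0 -mulrBl mulf_eq0 (negbTE s0) orbF subr_eq0 => /eqP//.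
by rewrite RRe_real //; apply/CrealP.
Qed.


Lemma char_split : exists rs : seq R, char_poly M = \prod_(r <- rs) ('X - r%:P).
Proof.
have [zs Hz] := closed_field_poly_normal (map_poly (real_complex R) (char_poly M)).
have lc : lead_coef (map_poly (real_complex R) (char_poly M)) = 1.
  by rewrite lead_coef_map (monicP (char_poly_monic M)).
rewrite lc scale1r in Hz.
have zsr : forall z, z \in zs -> z = (complex.Re z)%:C%C.
  by move=> z zin; apply: real_root; rewrite Hz root_prod_XsubC.
exists (map (@complex.Re R) zs).
apply: (@map_poly_inj _ _ (real_complex R)).
rewrite Hz rmorph_prod big_map; apply: eq_big_seq => z zin.
rewrite (rmorphB (map_poly (real_complex R))) /= map_polyX map_polyC /= -zsr //.
Qed.


Lemma peel (rs : seq R) (w : 'cV[R]_m.+1) :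
  (forall (l : R) (v : 'rV_m.+1), v *m M = l *: v -> v *m w = 0) ->
  (\prod_(r <- rs) (M - r%:M)) *m w = 0 -> w = 0.
Proof.
elim: rs w => [|r rs IH] w orth.
  by rewrite big_nil mul1mx.
have cs : forall a b : R, GRing.comm (M - a%:M) (M - b%:M).
  have cM : forall a, GRing.comm M a%:M.
    by move=> a; rewrite /GRing.comm -!mulmxE scalar_mxC.
  have cS : forall a b : R, GRing.comm (a%:M : 'M[R]_m.+1) b%:M.
    by move=> a b; rewrite /GRing.comm -!mulmxE -!scalar_mxM mulrC.
  move=> a b; apply: commrB; apply: commr_sym.
    by apply: commrB; [apply: commr_refl | apply: cM].
  by apply: commrB; [apply: commr_sym; apply: cM | apply: cS].
have cm : GRing.comm (M - r%:M) (\prod_(r0 <- rs) (M - r0%:M)).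
  by apply: commr_prod => i _; apply: cs.
rewrite big_cons cm -mulmxE -mulmxA => H.
have w1 : (M - r%:M) *m w = 0.
  apply: IH H => l v vM.
  rewrite mulmxA mulmxBr vM mul_mx_scalar -scalerBl -scalemxAl.
  by rewrite (orth l v vM) scaler0.
have Mw : M *m w = r *: w.
  by apply/eqP; rewrite -subr_eq0 -mul_scalar_mx -mulmxBl w1.
have wT : w^T *m M = r *: w^T by rewrite -symM -trmx_mul Mw linearZ.
have H2 := orth _ _ wT.
have : w^T = 0 by apply: sq0; rewrite trmxK H2 mxE.
by move/(congr1 trmx); rewrite trmxK trmx0.
Qed.

Lemma complete (w : 'cV[R]_m.+1) :
  (forall (l : R) (v : 'rV_m.+1), v *m M = l *: v -> v *m w = 0) -> w = 0.
Proof.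
move=> orth; have [rs Hrs] := char_split.
apply: (peel orth (rs := rs)).
have := Cayley_Hamilton M; rewrite Hrs rmorph_prod => H.
have -> : \prod_(r <- rs) (M - r%:M) = 0.
  by rewrite -H; apply: eq_bigr => r _; rewrite rmorphB /= horner_mx_X horner_mx_C.
by rewrite mul0mx.
Qed.

End Spec.

Section Main.
Variable R : realType.

Lemma unitBBT k p (B : 'M[R]_(k, p)) : row_free B -> B *m B^T \in unitmx.
Proof.
move=> fB; rewrite -row_free_unit -kermx_eq0; apply/eqP/row_matrixP => i.
rewrite row0; set u := row i _.
have H : u *m (B *m B^T) = 0 by rewrite /u -row_mul mulmx_ker row0.
have uB : u *m B = 0.
  by apply: sq0; rewrite trmx_mul mulmxA -(mulmxA u B) H mul0mx mxE.
by apply/eqP; rewrite -(mulmx_free_eq0 _ fB) uB.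
Qed.

Lemma eigproj_fix n (M : 'M[R]_n) l (v : 'rV_n) :
  v *m M = l *: v -> v *m eigproj M l = v.
Proof.
move=> vM; have : (v <= eigenspace M l)%MS by apply/eigenspaceP.
rewrite -(eq_row_base (eigenspace M l)) => /submxP [c ->].
set B := row_base _.
change (c *m B *m (B^T *m invmx (B *m B^T) *m B) = c *m B).
have fB : row_free B := row_base_free _.
clearbody B.
by rewrite !mulmxA -(mulmxA c) -(mulmxA c (B *m B^T)) mulmxV ?mulmx1 // unitBBT.
Qed.

Lemma dot_basis n (v : 'rV[R]_n) a : (v *m basis_vec R a) 0 0 = v 0 a.
Proof.
rewrite mxE (bigD1 a) //= big1 ?addr0; first by rewrite mxE eqxx mulr1.
by move=> k ka; rewrite mxE (negbTE ka) mulr0.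
Qed.

Lemma dot_ps n (v : 'rV[R]_n) s a b :
  (v *m pair_state s a b) 0 0 = v 0 a + s * v 0 b.
Proof.
by rewrite /pair_state mulmxDr -scalemxAr mxE [X in _ + X]mxE !dot_basis.
Qed.


Lemma adj_sym n (e : rel 'I_n) : (forall x y, e x y = e y x) -> (adjmx R e)^T = adjmx R e.
Proof. by move=> es; apply/matrixP => i j; rewrite !mxE es. Qed.

Lemma deg_sym n (e : rel 'I_n) : (degmx R e)^T = degmx R e.
Proof.
apply/matrixP => i j; rewrite !mxE; case: (eqVneq i j) => [->//|ij].
by rewrite !mul0r.
Qed.

Lemma ham_sym n (e : rel 'I_n) h : simple_graph e -> (ham_mx R e h)^T = ham_mx R e h.
Proof.
move=> [es _]; case: h => /=; rewrite ?/lapmx ?/slapmx ?raddfB ?raddfD /=;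
by rewrite adj_sym // deg_sym.
Qed.

Lemma ham_inv n (e : rel 'I_n) h (g : {perm 'I_n}) : graph_aut e g ->
  forall x y, ham_mx R e h (g x) (g y) = ham_mx R e h x y.
Proof.
move=> ga x y.
have cd : #|[set k | e (g x) k]| = #|[set k | e x k]|.
  rewrite -(card_preimset _ (@perm_inj _ g)).
  by apply: eq_card => k; rewrite !inE ga.
have dg : degmx R e (g x) (g y) = degmx R e x y.
  by rewrite !mxE (inj_eq (@perm_inj _ g)) cd.
have ad : adjmx R e (g x) (g y) = adjmx R e x y by rewrite !mxE ga.
have DB : forall (A B : 'M[R]_n) i j, (A - B) i j = A i j - B i j.
  by move=> A B i j; rewrite !mxE.
have DD : forall (A B : 'M[R]_n) i j, (A + B) i j = A i j + B i j.
  by move=> A B i j; rewrite !mxE.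
by case: h => //=; rewrite /lapmx /slapmx ?DB ?DD dg ad.
Qed.


Lemma perm_eig n (e : rel 'I_n) h (g : {perm 'I_n}) l (v : 'rV[R]_n) :
  graph_aut e g -> v *m ham_mx R e h = l *: v ->
  (\row_k v 0 (g k)) *m ham_mx R e h = l *: \row_k v 0 (g k).
Proof.
move=> ga vM; apply/rowP => j.
have := congr1 (fun A : 'rV_n => A 0 (g j)) vM.
rewrite [X in X = _ -> _]mxE [X in _ = X -> _]mxE => H.
rewrite [RHS]mxE [X in _ * X]mxE -H [RHS](reindex_inj (@perm_inj _ g)) mxE.
by apply: eq_bigr => k _; rewrite mxE ham_inv.
Qed.

Lemma dot_perm n (g : {perm 'I_n}) (v : 'rV[R]_n) s x y :
  ((\row_k v 0 (g k)) *m pair_state s x y) 0 0 = (v *m pair_state s (g x) (g y)) 0 0.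
Proof. by rewrite !dot_ps !mxE. Qed.

Lemma fix_ps n (e : rel 'I_n) h s (a b al be : 'I_n) (g : {perm 'I_n}) :
  simple_graph e ->
  strongly_cospectral (ham_mx R e h) (pair_state s a b) (pair_state s al be) ->
  graph_aut e g -> pair_state s (g a) (g b) = pair_state s a b ->
  pair_state s (g al) (g be) = pair_state s al be.
Proof.
move=> sg SC ga Hu.
destruct n as [|m]; first by have := ltn_ord a.
apply/eqP; rewrite -subr_eq0; apply/eqP; apply: (complete (ham_sym h sg)) => l v vM.
have [->|vn0] := eqVneq v 0; first by rewrite mul0mx.
have ev : eigenvalue (ham_mx R e h) l by apply/eigenvalueP; exists v.
have [eps [epsv Heps]] := SC l ev.
have key : forall w : 'rV_m.+1, w *m ham_mx R e h = l *: w ->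
    (w *m pair_state s a b) 0 0 = eps * (w *m pair_state s al be) 0 0.
  move=> w wM; have fE := eigproj_fix wM.
  move: Heps fE; set E := eigproj _ _; clearbody E => Heps fE.
  have := congr1 (mulmx w) Heps; rewrite -scalemxAr !mulmxA fE => ->.
  by rewrite mxE.
have k1 := key v vM.
have k2 := key _ (perm_eig ga vM).
rewrite !dot_perm Hu k1 in k2.
have e0 : eps != 0 by case: epsv => ->; rewrite ?oppr_eq0 oner_eq0.
apply/matrixP => i j; rewrite !ord1 mulmxBr.
have DB : forall (A B : 'M[R]_1), (A - B) 0 0 = A 0 0 - B 0 0.
  by move=> A B; rewrite !mxE.
rewrite DB [RHS]mxE.
by apply/eqP; rewrite subr_eq0; apply/eqP; apply: (mulfI e0); rewrite k2.
Qed.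

End Main.

Unset Implicit Arguments.
Set Strict Implicit.

Lemma ps_entry (R : realType) n s (x y k : 'I_n) :
  pair_state s x y k 0 = (k == x)%:R + s * (k == y)%:R :> R.
Proof. by rewrite !mxE. Qed.

Theorem mainTheorem5 (R : realType) (n : nat) (e : rel 'I_n) (h : hamiltonian)
  (s : R) (a b al be : 'I_n) :
  simple_graph e -> s != 0 -> a != b -> al != be ->
  strongly_cospectral (ham_mx R e h) (pair_state s a b) (pair_state s al be) ->
  (s != 1 ->
     forall g : {perm 'I_n}, graph_aut e g -> g a = a -> g b = b ->
       g al = al /\ g be = be) /\
  (s = 1 ->
     forall g : {perm 'I_n}, graph_aut e g -> [set g a; g b] = [set a; b] ->
       [set g al; g be] = [set al; be]).
Proof.
move=> sg s0 ab albe SC; split.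
  move=> s1 g ga gaa gbb.
  have H := fix_ps sg SC ga (etrans (f_equal2 _ gaa gbb) (erefl _)).
  have Hk : forall k, (k == g al)%:R + s * (k == g be)%:R = (k == al)%:R + s * (k == be)%:R :> R.
    by move=> k; have := congr1 (fun w : 'cV_n => w k 0) H; rewrite /= !ps_entry.
  have xy : g al != g be by rewrite (inj_eq (@perm_inj _ g)).
  case: (eqVneq (g al) al) => [xal|xal].
    split => //; have := Hk be; rewrite xal eqxx (eq_sym be al) (negbTE albe) !add0r mulr1.
    case: (eqVneq be (g be)) => [<-//|bey]; rewrite mulr0 => /esym/eqP.
    by rewrite (negbTE s0).
  have := Hk al; rewrite eqxx eq_sym (negbTE xal) (negbTE albe) mulr0 addr0 add0r.
  case: (eqVneq al (g be)) => [_|aly]; rewrite ?mulr1 ?mulr0 => /eqP.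
    by rewrite (negbTE s1).
  by rewrite eq_sym oner_eq0.
move=> s1 g ga Hset.
have gab : g a != g b by rewrite (inj_eq (@perm_inj _ g)).
have Hu : pair_state s (g a) (g b) = pair_state s a b.
  have : g a \in [set a; b] by rewrite -Hset !inE eqxx.
  have : g b \in [set a; b] by rewrite -Hset !inE eqxx orbT.
  rewrite !inE => /orP [] /eqP gb /orP [] /eqP ga'; rewrite ?gb ?ga' //.
  - by move: gab; rewrite gb ga' eqxx.
  - by rewrite /pair_state s1 !scale1r addrC.
  - by move: gab; rewrite gb ga' eqxx.
have H := fix_ps sg SC ga Hu.
have Hk : forall k, (k == g al)%:R + (k == g be)%:R = (k == al)%:R + (k == be)%:R :> R.
  by move=> k; have := congr1 (fun w : 'cV_n => w k 0) H; rewrite /= !ps_entry s1 !mul1r.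
have xy : g al != g be by rewrite (inj_eq (@perm_inj _ g)).
have one : forall k, k != g al -> k == g be -> (k == al) || (k == be).
  move=> k k1 k2; have := Hk k; rewrite (negbTE k1) k2 add0r.
  by case: (k == al); case: (k == be) => //= /eqP; rewrite addr0 oner_eq0.
have one' : forall k, k == g al -> k != g be -> (k == al) || (k == be).
  move=> k k1 k2; have := Hk k; rewrite (negbTE k2) k1 addr0.
  by case: (k == al); case: (k == be) => //= /eqP; rewrite addr0 oner_eq0.
have := one' _ (eqxx (g al)) xy; have := one (g be) ltac:(by rewrite eq_sym) (eqxx (g be)).
move=> /orP [] /eqP y /orP [] /eqP x; rewrite x y //.
- by move: xy; rewrite x y eqxx.
- by rewrite setUC.
- by move: xy; rewrite x y eqxx.
Qed.
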